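(* Let $X\subseteq\mathbb{C}^n$ be a complex analytic set, $x\in X$, $\mathcal M\subseteq\mathcal O_{X,x}^p$ a submodule with matrix of generators $[\mathcal M]$, and $k\in\mathbb N$. Then for all $t_1,\dots,t_k\in\{1,\dots,n\}$ and all $k$-indexes $I,J,K,L$, $$(z_{t_1}-z'_{t_1})\cdots(z_{t_k}-z'_{t_k})\,\det(\mathcal M_{IJ})\,\det(\mathcal M'_{KL})\in J_{2k}(\mathcal M_D)\quad\text{at }(x,x).$$
   Context: $z_1,\dots,z_n$ are coordinates on $\mathbb C^n$. $\pi_1,\pi_2:X\times X\to X$ are the projections; for an object $A$ on $X$ we write $A$ for $A\circ\pi_1$ and $A'$ for $A\circ\pi_2$ (so $z_i'=z_i\circ\pi_2$). $\mathcal M_{IJ}$ is the $k\times k$ submatrix of $[\mathcal M]$ with rows $I$ and columns $J$ ($k$-indexes are strictly increasing tuples). For $h\in\mathcal O_X^p$, $h_D=(h\circ\pi_1,h\circ\pi_2)$; $\mathcal M_D$ is the submodule of $\mathcal O^{2p}_{X\times X}$ generated by $\{h_D:h\in\mathcal M\}$; if $\mathcal M$ is generated by $g_1,\dots,g_r$, $\mathcal M_D$ is generated by the $(g_j)_D$ together with $(0,(z_i-z_i')g_j')$, $i=1..n$, $j=1..r$. $J_{m}(N)$ is the ideal generated by the $m\times m$ minors of a matrix of generators of $N$. *)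

(* Defs.v *)
From HB Require Import structures.
From mathcomp Require Import all_boot all_order all_algebra.
Set Implicit Arguments. Unset Strict Implicit. Unset Printing Implicit Defensive.
Import Order.TTheory GRing.Theory Num.Theory.
Local Open Scope ring_scope.

Definition kindex (k m : nat) (f : {ffun 'I_k -> 'I_m}) : bool :=
  [forall i : 'I_k, forall j : 'I_k, (i < j)%N ==> (f i < f j)%N].

Definition minor_ideal (S : comNzRingType) (P Q m : nat) (A : 'M[S]_(P, Q)) (a : S) : Prop :=
  exists c : {ffun ({ffun 'I_m -> 'I_P} * {ffun 'I_m -> 'I_Q}) -> S},
    a = \sum_(fg | kindex fg.1 && kindex fg.2)
          c fg * \det (mxsub fg.1 fg.2 A).

(* Matrix of generators of M_D, for M with generator matrix G (columns g_1..g_r):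
   columns (g_j o pi1, g_j o pi2), j < r, followed by the columns
   (0, (z_t - z_t') (g_j o pi2)), (t, j) in 'I_n x 'I_r. *)
Definition MD_mx (R S : comNzRingType) (phi1 phi2 : {rmorphism R -> S})
  (n p r : nat) (z : 'I_n -> R) (G : 'M[R]_(p, r)) : 'M[S]_(p + p, r + n * r) :=
  row_mx (col_mx (map_mx phi1 G) (map_mx phi2 G))
         (col_mx 0 (\matrix_(a < p)
              mxvec (\matrix_(t < n, j < r) ((phi1 (z t) - phi2 (z t)) * phi2 (G a j))))).

(* Main.v *)
Require Import Defs.
From HB Require Import structures.
From mathcomp Require Import all_boot all_order all_algebra all_fingroup.

Import Order.TTheory GRing.Theory Num.Theory.
Set Implicit Arguments. Unset Strict Implicit.
Local Open Scope ring_scope.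

Lemma sort_idx (m Q : nat) (g : 'I_m -> 'I_Q) : injective g ->
  exists (g' : {ffun 'I_m -> 'I_Q}) (s : 'S_m), kindex g' /\ forall i, g i = g' (s i).
Proof.
move=> ginj.
pose s0 := [tuple g i | i < m].
pose le := fun a b : 'I_Q => (a <= b)%N.
have szs : size (sort le s0) == m by rewrite size_sort size_tuple.
pose ts : m.-tuple 'I_Q := Tuple szs.
have pe : perm_eq s0 ts by rewrite perm_sym /= perm_sort.
have [p Hp] := tuple_permP pe.
exists [ffun i => tnth ts i], p; split; last first.
  move=> i; rewrite ffunE.
  have := congr1 (fun s : seq _ => nth (g i) s i) Hp.
  by rewrite -!tnth_nth tnth_map tnth_ord_tuple tnth_map tnth_ord_tuple.
have uts : uniq ts.
  rewrite /= sort_uniq map_inj_uniq ?enum_uniq //.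
have sts : sorted le ts.
  apply: sort_sorted => a b; exact: leq_total.
apply/forallP=> i; apply/forallP=> j; apply/implyP=> ij.
rewrite !ffunE.
have x0 := tnth ts i.
have Hle : (tnth ts i <= tnth ts j)%N.
  rewrite !(tnth_nth x0); apply: (sorted_ltn_nth _ x0 sts) => //.
  - by move=> a b c; exact: leq_trans.
  - by rewrite inE size_tuple.
  - by rewrite inE size_tuple.
rewrite ltn_neqAle Hle andbT.
have : tnth ts i != tnth ts j.
  rewrite !(tnth_nth x0) nth_uniq ?size_tuple //.
  by apply/eqP => /val_inj ije; rewrite ije ltnn in ij.
by apply: contra => /eqP /val_inj ->.
Qed.

Lemma det_noninj (S : comNzRingType) P m (B : 'M[S]_(P, m)) (f : 'I_m -> 'I_P) (i1 i2 : 'I_m) :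
  i1 != i2 -> f i1 = f i2 -> \det (\matrix_(i, j) B (f i) j) = 0.
Proof.
move=> ne e; apply: (determinant_alternate ne) => j; by rewrite !mxE e.
Qed.

Lemma find_noninj m T' (f : 'I_m -> T') (eqT : T' -> T' -> bool)
  (eqP' : forall a b, reflect (a = b) (eqT a b)) :
  injective f \/ exists i1 i2, i1 != i2 /\ f i1 = f i2.
Proof.
case: (boolP [exists i1, exists i2, (i1 != i2) && eqT (f i1) (f i2)]).
  case/existsP=> i1 /existsP [i2 /andP [ne /eqP' e]]; right; by exists i1, i2.
move=> /negP nex; left => x y fxy; apply/eqP; apply/negPn/negP => nxy; apply: nex.
apply/existsP; exists x; apply/existsP; exists y; rewrite nxy /=; exact/eqP'.
Qed.

Lemma minor_any (S : comNzRingType) P Q m (A : 'M[S]_(P,Q))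
  (f : 'I_m -> 'I_P) (g : 'I_m -> 'I_Q) : minor_ideal m A (\det (mxsub f g A)).
Proof.
have zero : minor_ideal m A 0.
  exists [ffun _ => 0]; rewrite big1 // => fg _; by rewrite ffunE mul0r.
have [finj | [i1 [i2 [ne e]]]] := find_noninj f (@eqP _).
  2: { have -> : mxsub f g A = \matrix_(i, j) (mxsub id g A) (f i) j.
         by apply/matrixP=> i j; rewrite !mxE.
       by rewrite (det_noninj _ ne e). }
have [ginj | [i1 [i2 [ne e]]]] := find_noninj g (@eqP _).
  2: { rewrite -det_tr.
       have -> : (mxsub f g A)^T = \matrix_(i, j) ((mxsub f id A)^T) (g i) j.
         by apply/matrixP=> i j; rewrite !mxE.
       by rewrite (det_noninj _ ne e). }
have [f' [p1 [kf Ef]]] := sort_idx finj.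
have [g' [p2 [kg Eg]]] := sort_idx ginj.
have -> : mxsub f g A = row_perm p1 (col_perm p2 (mxsub f' g' A)).
  by apply/matrixP=> i j; rewrite !mxE Ef Eg.
rewrite row_permE col_permE !det_mulmx !det_perm.
exists [ffun fg => if fg == (f', g') then (-1) ^+ p1 * (-1) ^+ (p2^-1)%g else 0].
rewrite (bigD1 (f', g')) /=; last by rewrite kf kg.
rewrite big1 ?addr0; last first.
  by move=> fg /andP [_ ne]; rewrite ffunE (negbTE ne) mul0r.
by rewrite ffunE eqxx -mulrA [_ * \det _]mulrC.
Qed.

Unset Implicit Arguments.

Theorem mainTheorem10 (R S : comNzRingType) (phi1 phi2 : {rmorphism R -> S})
  (n p r : nat) (z : 'I_n -> R) (G : 'M[R]_(p, r)) (k : nat)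
  (t : 'I_k -> 'I_n)
  (I K : {ffun 'I_k -> 'I_p}) (J L : {ffun 'I_k -> 'I_r}) :
  kindex I -> kindex J -> kindex K -> kindex L ->
  minor_ideal (2 * k) (MD_mx phi1 phi2 z G)
    ((\prod_(m < k) (phi1 (z (t m)) - phi2 (z (t m))))
       * phi1 (\det (mxsub I J G)) * \det (mxsub K L (map_mx phi2 G))).
Proof.
move=> _ _ _ _.
rewrite mul2n -addnn.
pose rows (i : 'I_(k + k)) : 'I_(p + p) :=
  match split i with inl a => lshift p (I a) | inr b => rshift p (K b) end.
pose cols (i : 'I_(k + k)) : 'I_(r + n * r) :=
  match split i with inl a => lshift (n * r) (J a)
                   | inr b => rshift r (mxvec_index (t b) (L b)) end.
pose d := \row_(b < k) (phi1 (z (t b)) - phi2 (z (t b))).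
have E : mxsub rows cols (MD_mx phi1 phi2 z G) =
  block_mx (map_mx phi1 (mxsub I J G)) 0 (mxsub K J (map_mx phi2 G))
           (mxsub K L (map_mx phi2 G) *m diag_mx d).
  apply/matrixP=> i j.
  rewrite -[i](splitK) -[j](splitK).
  case: (split i) => a; case: (split j) => b; rewrite mxE /rows /cols !unsplitK /MD_mx /=.
  - by rewrite block_mxEul row_mxEl col_mxEu !mxE.
  - by rewrite block_mxEur row_mxEr col_mxEu !mxE.
  - by rewrite block_mxEdl row_mxEl col_mxEd !mxE.
  - by rewrite block_mxEdr row_mxEr col_mxEd mul_mx_diag !mxE mxvecE !mxE mulrC.
have -> : (\prod_(m < k) (phi1 (z (t m)) - phi2 (z (t m))))
       * phi1 (\det (mxsub I J G)) * \det (mxsub K L (map_mx phi2 G))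
       = \det (mxsub rows cols (MD_mx phi1 phi2 z G)).
  rewrite E det_lblock det_mulmx det_diag det_map_mx.
  have -> : \prod_i d 0 i = \prod_(m < k) (phi1 (z (t m)) - phi2 (z (t m))).
    by apply: eq_bigr => i _; rewrite mxE.
  by rewrite -mulrA mulrC -mulrA.
exact: minor_any.
Qed.
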